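(* Let $Q:P\to P$ be a linear operator with $\deg(Qp)=\deg p-1$ for every $p\in P$ (with the convention $\deg 0=-1$, so $Q$ annihilates constants). Write $Qx^n=\sum_{k=1}^{n}b_{n,k}x^{n-k}$ ($b_{n,k}\in\mathbf F$), so that $b_{n,1}\neq 0$ for all $n\ge1$, and assume $b_{1,1}=1$. Then there exist scalars $\{q_k\}_{k\ge2}\subset\mathbf F$ and an admissible sequence $\psi$ such that $$Q=\partial_\psi+\sum_{k\ge2}q_k\,\partial_\psi^{\,k}$$ (as operators on $P$; the sum is finite on each polynomial) if and only if there exists an admissible sequence $\psi$ such that $$b_{n,k}=\binom{n}{k}_{\psi}b_{k,k}\qquad\text{for all } n\ge k\ge 1 .$$ Moreover, if such $\{q_k\}_{k\ge2}$ and $\psi$ exist, they are unique.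
   Context: $\mathbf F$ is a field of characteristic zero and $P=\mathbf F[x]$. An admissible sequence is $\psi=(\psi_n)_{n\ge0}$ with $\psi_n\in\mathbf F$, $\psi_0=1$, $\psi_n\neq0$ for all $n$. Set $0_\psi=0$, $n_\psi=\psi_{n-1}/\psi_n$ for $n\ge1$, $n_\psi!=\psi_n^{-1}=n_\psi(n-1)_\psi\cdots1_\psi$ with $0_\psi!=1$, $n_\psi^{\underline k}=n_\psi(n-1)_\psi\cdots(n-k+1)_\psi$, and $\binom{n}{k}_\psi=n_\psi^{\underline k}/k_\psi!$. The $\psi$-derivative $\partial_\psi$ is the linear operator on $P$ with $\partial_\psi x^n=n_\psi x^{n-1}$ ($n\ge0$). *)

(* Defs.v *)
From HB Require Import structures.
From mathcomp Require Import all_boot all_order all_algebra.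
Set Implicit Arguments. Unset Strict Implicit. Unset Printing Implicit Defensive.
Import GRing.Theory.
Local Open Scope ring_scope.

Section PsiCalculus.
Variable F : fieldType.

Definition admissible (psi : nat -> F) : Prop :=
  psi 0%N = 1 /\ forall n, psi n != 0.

Definition psi_num (psi : nat -> F) (n : nat) : F :=
  match n with 0%N => 0 | m.+1 => psi m / psi m.+1 end.

Definition psi_fact (psi : nat -> F) (n : nat) : F := (psi n)^-1.

Definition psi_falling (psi : nat -> F) (n k : nat) : F :=
  \prod_(i < k) psi_num psi (n - i).

Definition psi_binom (psi : nat -> F) (n k : nat) : F :=
  psi_falling psi n k / psi_fact psi k.

Definition psi_deriv (psi : nat -> F) (p : {poly F}) : {poly F} :=
  \poly_(i < (size p).-1) (p`_i.+1 * psi_num psi i.+1).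

Definition bcoef (Q : {poly F} -> {poly F}) (n k : nat) : F :=
  (Q 'X^n)`_(n - k).

End PsiCalculus.

(* Main.v *)
Require Import Defs.
From HB Require Import structures.
From mathcomp Require Import all_boot all_order all_algebra.
From Stdlib Require Import FunctionalExtensionality.
Import GRing.Theory.
Set Implicit Arguments. Unset Strict Implicit. Unset Printing Implicit Defensive.
Local Open Scope ring_scope.

Lemma coef_D (F : fieldType) (psi : nat -> F) p i :
  (psi_deriv psi p)`_i = p`_i.+1 * psi_num psi i.+1.
Proof.
rewrite /psi_deriv coef_poly; case: ltnP => h //.
rewrite -subn1 leq_subLR add1n in h.
by move: (leq_sizeP _ _ h) => /(_ i.+1 (leqnn _)) ->; rewrite mul0r.
Qed.

Lemma coef_iterD (F : fieldType) (psi : nat -> F) k p i :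
  (iter k (psi_deriv psi) p)`_i = p`_(i + k) * psi_falling psi (i + k) k.
Proof.
elim: k i => [|k IH] i /=.
  by rewrite addn0 /psi_falling big_ord0 mulr1.
rewrite coef_D IH /psi_falling big_ord_recr /= addnS -addSn addnK mulrA.
by rewrite -!mulrA.
Qed.

Definition qq (F : fieldType) (q : nat -> F) k := if k == 1%N then 1 else q k.

Definition G (F : fieldType) (q psi : nat -> F) N (p : {poly F}) :=
  \sum_(1 <= k < N) qq q k *: iter k (psi_deriv psi) p.

Lemma coef_G (F : fieldType) (q psi : nat -> F) N p j :
  (G q psi N p)`_j = \sum_(1 <= k < N) qq q k * (p`_(j + k) * psi_falling psi (j + k) k).
Proof. by rewrite /G coef_sum; apply: eq_bigr => k _; rewrite coefZ coef_iterD. Qed.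

Lemma coef_G_Xn (F : fieldType) (q psi : nat -> F) N n j : (n < N)%N ->
  (G q psi N 'X^n)`_j = if (j < n)%N then qq q (n - j)%N * psi_falling psi n (n - j)%N else 0.
Proof.
move=> hN; rewrite coef_G; case: ltnP => hj.
  rewrite (eq_bigr (fun k => if k == (n - j)%N then qq q k * psi_falling psi n k else 0)).
    rewrite -big_mkcond big_nat1_eq subn_gt0 hj /=.
    by rewrite (leq_ltn_trans (leq_subr _ _) hN).
  move=> k _; rewrite coefXn.
  have -> : (j + k == n)%N = (k == n - j)%N.
    by apply/eqP/eqP => [<-|->]; [rewrite addKn | rewrite subnKC // ltnW].
  case: eqP => [->|_]; last by rewrite mul0r mulr0.
  by rewrite subnKC ?(ltnW hj) // mul1r.
rewrite big1_seq // => k /andP[_]; rewrite mem_index_iota => /andP[hk _].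
rewrite coefXn.
have -> : (j + k == n)%N = false.
  apply/negbTE; rewrite neq_ltn; apply/orP; right.
  by apply: (leq_ltn_trans hj); rewrite -addn1 leq_add2l.
by rewrite mulr0n mul0r mulr0.
Qed.

Lemma iterD0 (F : fieldType) (psi : nat -> F) k (p : {poly F}) : (size p <= k)%N ->
  iter k (psi_deriv psi) p = 0.
Proof.
move=> hk; apply/polyP => i; rewrite coef_iterD coef0.
by move/leq_sizeP: hk => /(_ (i + k)%N (leq_addl _ _)) ->; rewrite mul0r.
Qed.

Lemma poly_exp (F : fieldType) (p : {poly F}) :
  p = \sum_(n < size p) p`_n *: 'X^n.
Proof. by rewrite -poly_def coefK. Qed.

Lemma G_lin (F : fieldType) (q psi : nat -> F) N (p : {poly F}) :
  G q psi N p = \sum_(n < size p) p`_n *: G q psi N 'X^n.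
Proof.
apply/polyP => j; rewrite coef_G coef_sum.
under [RHS]eq_bigr do rewrite coefZ coef_G mulr_sumr.
rewrite exchange_big /=; apply: eq_bigr => k _.
have -> : p`_(j + k) = \sum_(n < size p) p`_n * 'X^n`_(j + k).
  by rewrite {1}(poly_exp p) coef_sum; apply: eq_bigr => n _; rewrite coefZ.
rewrite !mulr_suml mulr_sumr; apply: eq_bigr => n _.
by rewrite -!mulrA mulrCA.
Qed.

Lemma Q_lin (F : fieldType) (Q : {linear {poly F} -> {poly F}}) (p : {poly F}) :
  Q p = \sum_(n < size p) p`_n *: Q 'X^n.
Proof.
by rewrite {1}(poly_exp p) linear_sum; apply: eq_bigr => n _; rewrite linearZ.
Qed.

Lemma RHS_G (F : fieldType) (q psi : nat -> F) (p : {poly F}) :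
  psi_deriv psi p + \sum_(2 <= k < size p) q k *: iter k (psi_deriv psi) p
  = G q psi (size p).+1 p.
Proof.
rewrite /G; case: (leqP (size p) 1) => hs.
  rewrite big_geq ?(leq_trans hs) // addr0 big1_seq.
    exact: (@iterD0 _ psi 1 p).
  move=> k /andP[_]; rewrite mem_index_iota => /andP[hk _].
  by rewrite iterD0 ?scaler0 // (leq_trans hs).
rewrite [in RHS]big_ltn; last by rewrite ltnS ltnW.
rewrite {1}/qq /= scale1r.
rewrite [in RHS]big_nat_recr ?(ltnW hs) //= (@iterD0 _ psi (size p) p) // scaler0 addr0.
congr (_ + _); apply: eq_big_nat => k /andP[hk _].
by rewrite /qq; case: eqP => // h; rewrite h in hk.
Qed.

Lemma falling_kk (F : fieldType) (psi : nat -> F) k : admissible psi ->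
  psi_falling psi k k = (psi k)^-1.
Proof.
move=> [h0 hn]; elim: k => [|k IH].
  by rewrite /psi_falling big_ord0 h0 invr1.
rewrite /psi_falling big_ord_recl subn0 /=.
under eq_bigr do rewrite subSS.
rewrite -/(psi_falling psi k k) IH.
by rewrite mulrAC mulfV ?mul1r.
Qed.

Lemma falling1 (F : fieldType) (psi : nat -> F) n :
  psi_falling psi n 1 = psi_num psi n.
Proof. by rewrite /psi_falling big_ord1 subn0. Qed.

Lemma bcoef_rep (F : fieldType) (Q : {linear {poly F} -> {poly F}}) (q psi : nat -> F) :
  (forall p : {poly F},
        Q p = psi_deriv psi p
              + \sum_(2 <= k < size p) q k *: iter k (psi_deriv psi) p) ->
  forall n k, (1 <= k <= n)%N -> bcoef Q n k = qq q k * psi_falling psi n k.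
Proof.
move=> hQ n k /andP[hk hkn]; rewrite /bcoef hQ RHS_G coef_G_Xn; last first.
  by rewrite size_polyXn.
have -> : (n - k < n)%N by rewrite ltn_subrL hk (leq_trans hk hkn).
by rewrite subKn.
Qed.

Lemma rescale_num (F : fieldType) (psi : nat -> F) c m : c != 0 ->
  psi_num (fun n => psi n / c ^+ n) m = psi_num psi m * c.
Proof.
move=> hc; case: m => [|m] /=; first by rewrite mul0r.
rewrite invf_div exprS [c * _]mulrC !mulrA divfK ?expf_neq0 //.
by rewrite mulrAC.
Qed.

Lemma rescale_fall (F : fieldType) (psi : nat -> F) c n k : c != 0 ->
  psi_falling (fun n => psi n / c ^+ n) n k = psi_falling psi n k * c ^+ k.
Proof.
move=> hc; rewrite /psi_falling.
under eq_bigr do rewrite rescale_num //.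
by rewrite big_split /= prodr_const card_ord.
Qed.
Theorem mainTheorem1 (F : fieldType) (charF0 : [pchar F] =i pred0)
    (Q : {linear {poly F} -> {poly F}})
    (hdeg : forall p : {poly F}, size (Q p) = (size p).-1)
    (hb11 : bcoef Q 1 1 = 1) :
  ((exists (q : nat -> F) (psi : nat -> F), admissible psi /\
      forall p : {poly F},
        Q p = psi_deriv psi p
              + \sum_(2 <= k < size p) q k *: iter k (psi_deriv psi) p)
   <->
   (exists psi : nat -> F, admissible psi /\
      forall n k : nat, (1 <= k <= n)%N ->
        bcoef Q n k = psi_binom psi n k * bcoef Q k k))
  /\
  (forall (q1 q2 psi1 psi2 : nat -> F),
      admissible psi1 ->
      (forall p : {poly F},
        Q p = psi_deriv psi1 p
              + \sum_(2 <= k < size p) q1 k *: iter k (psi_deriv psi1) p) ->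
      admissible psi2 ->
      (forall p : {poly F},
        Q p = psi_deriv psi2 p
              + \sum_(2 <= k < size p) q2 k *: iter k (psi_deriv psi2) p) ->
      psi1 = psi2 /\ (forall k, (2 <= k)%N -> q1 k = q2 k)).
Proof.
Proof.
split; last first.
  move=> q1 q2 psi1 psi2 a1 h1 a2 h2.
  have hnum : forall n, psi_num psi1 n = psi_num psi2 n.
    case=> [//|n].
    have e1 := bcoef_rep h1 (n:=n.+1) (k:=1).
    have e2 := bcoef_rep h2 (n:=n.+1) (k:=1).
    move: (e1 isT) (e2 isT); rewrite /qq /= !mul1r !falling1 => -> //.
  have hpsi : psi1 = psi2.
    apply: functional_extensionality => m; elim: m => [|m IH].
      by rewrite a1.1 a2.1.
    have := hnum m.+1; rewrite /= IH => e.
    exact: invr_inj (mulfI (a2.2 m) e).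
  split => // k hk; subst psi2.
  have e1 := bcoef_rep h1 (n:=k) (k:=k).
  have e2 := bcoef_rep h2 (n:=k) (k:=k).
  have hkk : (1 <= k <= k)%N by rewrite (ltnW hk) leqnn.
  have e := etrans (esym (e1 hkk)) (e2 hkk).
  rewrite falling_kk // in e.
  have := mulIf (invr_neq0 (a1.2 k)) e.
  rewrite /qq; case: eqP => // hk1; by rewrite hk1 in hk.
split.
  move=> [q [psi [hadm hQ]]]; exists psi; split => // n k hk.
  have hkk : (1 <= k <= k)%N by rewrite (andP hk).1 leqnn.
  rewrite (bcoef_rep hQ hk) (bcoef_rep hQ hkk) falling_kk // /psi_binom /psi_fact invrK.
  by rewrite [RHS]mulrCA -mulrA mulfV ?mulr1 // hadm.2.
move=> [psi [[h0 hn] hb]].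
set c := psi 1%N.
have hc : c != 0 by apply: hn.
set psi' := fun n => psi n / c ^+ n.
exists (fun k => psi' k * bcoef Q k k), psi'.
have adm' : admissible psi'.
  split; first by rewrite /psi' h0 expr0 divr1.
  by move=> n; rewrite mulf_neq0 // invr_eq0 expf_neq0.
have hbq : forall n k, (1 <= k <= n)%N ->
    bcoef Q n k = qq (fun k => psi' k * bcoef Q k k) k * psi_falling psi' n k.
  move=> n k hk; rewrite rescale_fall // hb // /psi_binom /psi_fact invrK /qq.
  case: eqP => [->|h].
    by rewrite hb11 mulr1 mul1r expr1.
  rewrite /psi' [RHS]mulrAC; congr (_ * _).
  by rewrite mulrA [RHS]mulrAC divfK ?expf_neq0 // mulrC.
split => // p.
rewrite RHS_G Q_lin G_lin; apply: eq_bigr => n _; congr (_ *: _).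
apply/polyP => j; rewrite coef_G_Xn ?leqW //.
case: ltnP => hj.
  rewrite -[in LHS](subKn (ltnW hj)) -/(bcoef Q n (n - j)) hbq //.
  by rewrite subn_gt0 hj leq_subr.
move: (hdeg 'X^n); rewrite size_polyXn /= => hs.
by move/leq_sizeP: (eq_leq hs) => /(_ j hj).
Qed.
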